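(* Let $G_n$ be a finite simple graph on $n\ge1$ vertices and let $x\in V(G_n)$ be a dominating vertex. Then for every $t\ge0$ and $y\in V(G_n)$, $$P^x_{G_n,t}(y)=\begin{cases}1-\dfrac2n\left(1-\dfrac1n\right)(1-\cos nt), & y=x,\\[2mm] \dfrac{2}{n^2}(1-\cos nt), & y\ne x.\end{cases}$$ In particular, for any sequence of graphs $G_n$ with $n\to\infty$ vertices and dominating vertices $x_n\in V(G_n)$, $\lim_{n\to\infty}P^{x_n}_{G_n,t}(x_n)=1$ for every fixed $t\ge0$.
   Context: For a finite simple graph $G$, $L_G=D_G-A_G$ is its Laplacian ($A_G$ adjacency matrix, $D_G$ diagonal degree matrix). The continuous-time quantum walk (CTQW) on $G$ has evolution operator $U_{G,t}=e^{\sqrt{-1}\,tL_G}$ ($t\ge0$), and the transition probability is $P^x_{G,t}(y)=|(U_{G,t})_{x,y}|^2$ for $x,y\in V(G)$. A vertex of a graph on $n$ vertices is dominating if its degree is $n-1$, i.e., it is adjacent to all other vertices. *)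

(* Defs.v *)
From Stdlib Require Import Reals Lra Factorial List.
Open Scope R_scope.

Fixpoint rsum (n : nat) (f : nat -> R) : R :=
  match n with O => 0 | S m => rsum m f + f m end.

(* Complex numbers as pairs (real part, imaginary part). *)
Definition C := (R * R)%type.
Definition C0 : C := (0, 0).
Definition C1 : C := (1, 0).
Definition cadd (a b : C) : C := (fst a + fst b, snd a + snd b).
Definition cmul (a b : C) : C :=
  (fst a * fst b - snd a * snd b, fst a * snd b + snd a * fst b).
Definition cscale (r : R) (a : C) : C := (r * fst a, r * snd a).
Definition cnorm2 (a : C) : R := fst a ^ 2 + snd a ^ 2.
Fixpoint csum (n : nat) (f : nat -> C) : C :=
  match n with O => C0 | S m => cadd (csum m f) (f m) end.

(* A finite simple graph on vertex set {0,...,n-1}: adjacency relation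
   [adj] that is symmetric and loopless (values outside range unused). *)
Definition simple_graph (adj : nat -> nat -> bool) : Prop :=
  (forall i j, adj i j = adj j i) /\ (forall i, adj i i = false).

Definition deg (n : nat) (adj : nat -> nat -> bool) (i : nat) : nat :=
  List.length (List.filter (fun j => adj i j) (List.seq 0 n)).

Definition dominating (n : nat) (adj : nat -> nat -> bool) (x : nat) : Prop :=
  (x < n)%nat /\ deg n adj x = (n - 1)%nat.

Definition laplacian (n : nat) (adj : nat -> nat -> bool) (i j : nat) : R :=
  (if Nat.eqb i j then INR (deg n adj i) else 0) - (if adj i j then 1 else 0).

Definition cmat := nat -> nat -> C.
Definition cmatmul (n : nat) (A B : cmat) : cmat :=
  fun i j => csum n (fun k => cmul (A i k) (B k j)).
Definition cmatid : cmat := fun i j => if Nat.eqb i j then C1 else C0.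
Fixpoint cmatpow (n : nat) (A : cmat) (k : nat) : cmat :=
  match k with O => cmatid | S k' => cmatmul n (cmatpow n A k') A end.

Definition itL (n : nat) (adj : nat -> nat -> bool) (t : R) : cmat :=
  fun i j => (0, t * laplacian n adj i j).

Definition expser (n : nat) (adj : nat -> nat -> bool) (t : R) (x y : nat)
  (N : nat) : C :=
  csum (S N) (fun k => cscale (/ INR (fact k)) (cmatpow n (itL n adj t) k x y)).

(* U_{G,t} = e^{i t L_G}: [walk_entry ... u] says the (x,y) entry of the
   exponential series converges to u. *)
Definition walk_entry (n : nat) (adj : nat -> nat -> bool) (t : R) (x y : nat)
  (u : C) : Prop :=
  Un_cv (fun N => fst (expser n adj t x y N)) (fst u) /\
  Un_cv (fun N => snd (expser n adj t x y N)) (snd u).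

(* P^x_{G,t}(y) = p : the entry (U_{G,t})_{x,y} exists and |.|^2 = p. *)
Definition transition_prob (n : nat) (adj : nat -> nat -> bool) (t : R)
  (x y : nat) (p : R) : Prop :=
  exists u : C, walk_entry n adj t x y u /\ p = cnorm2 u.

(* Main.v *)
Require Import Defs.
From Stdlib Require Import Reals Lra Lia List Factorial.
Open Scope R_scope.

Lemma C_ext (a b : Defs.C) : fst a = fst b -> snd a = snd b -> a = b.
Proof. destruct a, b; simpl; intros -> ->; reflexivity. Qed.

Lemma rsum_ext n f g : (forall m, (m < n)%nat -> f m = g m) -> rsum n f = rsum n g.
Proof. induction n; simpl; intros H; auto. rewrite IHn, H; auto. Qed.

Lemma rsum_plus n f g : rsum n (fun m => f m + g m) = rsum n f + rsum n g.
Proof. induction n; simpl; [ring|rewrite IHn; ring]. Qed.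

Lemma rsum_minus n f g : rsum n (fun m => f m - g m) = rsum n f - rsum n g.
Proof. induction n; simpl; [ring|rewrite IHn; ring]. Qed.

Lemma rsum_scal n c f : rsum n (fun m => c * f m) = c * rsum n f.
Proof. induction n; simpl; [ring|rewrite IHn; ring]. Qed.

Lemma rsum_const n c : rsum n (fun _ => c) = INR n * c.
Proof. induction n; simpl rsum; [simpl; ring|rewrite IHn, S_INR; ring]. Qed.

Lemma rsum_le n f g : (forall m, (m < n)%nat -> f m <= g m) -> rsum n f <= rsum n g.
Proof. induction n; simpl; intros H; [lra|].
  assert (rsum n f <= rsum n g) by (apply IHn; intros; apply H; lia).
  specialize (H n (Nat.lt_succ_diag_r n)). lra. Qed.

Lemma rsum_delta0 n x f : (n <= x)%nat -> rsum n (fun m => if Nat.eqb m x then f m else 0) = 0.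
Proof. induction n; simpl; intros H; auto.
  rewrite IHn by lia. destruct (Nat.eqb_spec n x); [lia|ring]. Qed.

Lemma rsum_delta n x f : (x < n)%nat -> rsum n (fun m => if Nat.eqb m x then f m else 0) = f x.
Proof. induction n; simpl; intros H; [lia|].
  destruct (Nat.eqb_spec n x).
  - subst. rewrite rsum_delta0 by lia. ring.
  - rewrite IHn by lia. ring. Qed.

Lemma fst_csum n f : fst (csum n f) = rsum n (fun m => fst (f m)).
Proof. induction n; simpl; auto. rewrite IHn; auto. Qed.
Lemma snd_csum n f : snd (csum n f) = rsum n (fun m => snd (f m)).
Proof. induction n; simpl; auto. rewrite IHn; auto. Qed.

Lemma csum_ext n f g : (forall m, (m < n)%nat -> f m = g m) -> csum n f = csum n g.
Proof. induction n; simpl; intros H; auto. rewrite IHn, H; auto. Qed.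

Lemma deg_rsum n adj i : INR (deg n adj i) = rsum n (fun j => if adj i j then 1 else 0).
Proof. unfold deg. induction n; [reflexivity|].
  rewrite seq_S, filter_app, length_app, plus_INR, IHn. cbn [rsum filter]. simpl.
  destruct (adj i n); simpl; ring. Qed.

Fixpoint cpow (z : Defs.C) (k : nat) : Defs.C :=
  match k with O => Defs.C1 | S k => cmul (cpow z k) z end.

Lemma cpow_eo th j :
  fst (cpow (0,th) (2*j)) = (-1)^j * th^(2*j) /\ snd (cpow (0,th) (2*j)) = 0 /\
  fst (cpow (0,th) (2*j+1)) = 0 /\ snd (cpow (0,th) (2*j+1)) = (-1)^j * th^(2*j+1).
Proof.
  induction j.
  - simpl. repeat split; ring.
  - destruct IHj as (H1 & H2 & H3 & H4).
    replace (2 * S j)%nat with (S (2*j+1)) by lia.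
    replace (S (2*j+1) + 1)%nat with (S (S (2*j+1))) by lia.
    cbn [cpow]. unfold cmul. cbn [fst snd]. rewrite H3, H4.
    simpl. rewrite !pow_add. simpl. repeat split; ring.
Qed.

Definition Ecs (th : R) (N : nat) : Defs.C :=
  csum (S N) (fun k => cscale (/ INR (fact k)) (cpow (0,th) k)).

Lemma Ecs_S th N : Ecs th (S N) =
  cadd (Ecs th N) (cscale (/ INR (fact (S N))) (cpow (0,th) (S N))).
Proof. reflexivity. Qed.

Lemma Ecs_fst th M : fst (Ecs th (2*M)) = A1 th M /\ fst (Ecs th (2*M+1)) = A1 th M.
Proof.
  induction M.
  - simpl. unfold A1. simpl. split; field.
  - destruct IHM as [_ H].
    replace (2 * S M)%nat with (S (2*M+1)) by lia.
    replace (S (2*M+1) + 1)%nat with (S (S (2*M+1))) by lia.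
    rewrite !Ecs_S. cbn [cadd cscale fst]. rewrite H.
    replace (S (2*M+1)) with (2 * S M)%nat by lia.
    replace (S (2*S M)) with (2 * S M + 1)%nat by lia.
    destruct (cpow_eo th (S M)) as (H1 & _ & H3 & _). rewrite H1, H3.
    unfold A1. cbn [sum_f_R0]. fold (A1 th M). split; unfold Rdiv; ring.
Qed.

Lemma Ecs_snd th M : snd (Ecs th (2*M+1)) = B1 th M /\ snd (Ecs th (2*M+2)) = B1 th M.
Proof.
  induction M.
  - simpl. unfold B1. simpl. split; field.
  - destruct IHM as [_ H].
    replace (2 * S M + 1)%nat with (S (2*M+2)) by lia.
    replace (2 * S M + 2)%nat with (S (S (2*M+2))) by lia.
    rewrite !Ecs_S. cbn [cadd cscale snd]. rewrite H.
    replace (S (2*M+2)) with (2 * S M + 1)%nat by lia.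
    replace (S (2*S M+1)) with (2 * S (S M))%nat by lia.
    destruct (cpow_eo th (S M)) as (_ & _ & _ & H4).
    destruct (cpow_eo th (S (S M))) as (_ & H2 & _ & _). rewrite H2, H4.
    unfold B1. cbn [sum_f_R0]. fold (B1 th M). split; unfold Rdiv; ring.
Qed.

Lemma cv_eo (a c : nat -> R) L :
  (forall M, a (2*M)%nat = c M /\ a (2*M+1)%nat = c M) -> Un_cv c L -> Un_cv a L.
Proof.
  intros H Hc eps Heps. destruct (Hc eps Heps) as [N0 HN].
  exists (2*N0)%nat. intros n Hn.
  destruct (Nat.Even_or_Odd n) as [[m Hm]|[m Hm]]; subst n.
  - rewrite (proj1 (H m)). apply HN. lia.
  - rewrite (proj2 (H m)). apply HN. lia.
Qed.

Lemma cv_shift (a : nat -> R) L : Un_cv (fun N => a (S N)) L -> Un_cv a L.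
Proof.
  intros H eps Heps. destruct (H eps Heps) as [N0 HN].
  exists (S N0). intros n Hn. destruct n; [lia|]. apply HN. lia.
Qed.

Lemma Ecs_cos th : Un_cv (fun N => fst (Ecs th N)) (cos th).
Proof. apply cv_eo with (c := A1 th); [apply Ecs_fst|apply A1_cvg]. Qed.

Lemma Ecs_sin th : Un_cv (fun N => snd (Ecs th N)) (sin th).
Proof.
  apply cv_shift. apply cv_eo with (c := B1 th); [|apply B1_cvg].
  intro M. destruct (Ecs_snd th M) as [H1 H2]. split.
  - replace (S (2*M)) with (2*M+1)%nat by lia. exact H1.
  - replace (S (2*M+1)) with (2*M+2)%nat by lia. exact H2.
Qed.

Lemma cv_affine (a : nat -> R) L c d b :
  (forall N, b N = c * a N + d) -> Un_cv a L -> Un_cv b (c * L + d).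
Proof.
  intros Hb H eps Heps.
  destruct (H (eps / (Rabs c + 1))) as [N0 HN].
  { apply Rdiv_lt_0_compat; [lra|]. pose proof (Rabs_pos c); lra. }
  exists N0. intros n Hn. rewrite Hb. unfold R_dist in *.
  replace (c * a n + d - (c * L + d)) with (c * (a n - L)) by ring.
  rewrite Rabs_mult. specialize (HN n Hn).
  pose proof (Rabs_pos c). pose proof (Rabs_pos (a n - L)).
  apply Rle_lt_trans with ((Rabs c + 1) * Rabs (a n - L)); [nra|].
  replace eps with ((Rabs c + 1) * (eps / (Rabs c + 1))) by (field; lra).
  apply Rmult_lt_compat_l; lra.
Qed.

Definition vv (n x m : nat) : R := (if Nat.eqb m x then 1 else 0) - / INR n.

Lemma L_colsum n adj y : simple_graph adj -> (y < n)%nat ->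
  rsum n (fun m => laplacian n adj m y) = 0.
Proof.
  intros [Hs Hl] Hy. unfold laplacian. rewrite rsum_minus.
  rewrite (rsum_delta n y (fun m => INR (deg n adj m))) by exact Hy.
  rewrite deg_rsum. rewrite (rsum_ext n (fun m => if adj m y then 1 else 0)
    (fun j => if adj y j then 1 else 0)); [ring|].
  intros m _. rewrite Hs. reflexivity.
Qed.

Lemma dom_adj n adj x y : simple_graph adj -> dominating n adj x -> (y < n)%nat -> y <> x ->
  adj x y = true.
Proof.
  intros [Hs Hl] [Hx Hd] Hy Hyx. destruct (adj x y) eqn:E; auto. exfalso.
  assert (H1 : INR (deg n adj x) <= rsum n (fun j => 1 - (if Nat.eqb j x then 1 else 0)
     - (if Nat.eqb j y then 1 else 0))).
  { rewrite deg_rsum. apply rsum_le. intros m Hm.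
    destruct (Nat.eqb_spec m x); destruct (Nat.eqb_spec m y); subst; try lia.
    - rewrite Hl. lra.
    - rewrite E. lra.
    - destruct (adj x m); lra. }
  rewrite !rsum_minus, rsum_const in H1.
  rewrite (rsum_delta n x (fun _ => 1)) in H1 by exact Hx.
  rewrite (rsum_delta n y (fun _ => 1)) in H1 by exact Hy.
  rewrite Hd, minus_INR in H1 by lia. simpl in H1. lra.
Qed.

Lemma L_row n adj x y : simple_graph adj -> dominating n adj x -> (y < n)%nat ->
  laplacian n adj x y = INR n * vv n x y.
Proof.
  intros G D Hy. pose proof D as [Hx Hd]. unfold laplacian, vv.
  assert (INR n <> 0) by (apply not_0_INR; lia).
  destruct (Nat.eqb_spec x y); destruct (Nat.eqb_spec y x); try lia.
  - subst. rewrite (proj2 G). rewrite Hd, minus_INR by lia. simpl. field. auto.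
  - rewrite (dom_adj n adj x y) by auto. field. auto.
Qed.

Lemma L_vsum n adj x y : simple_graph adj -> dominating n adj x -> (y < n)%nat ->
  rsum n (fun m => vv n x m * laplacian n adj m y) = INR n * vv n x y.
Proof.
  intros G D Hy. pose proof D as [Hx Hd].
  rewrite (rsum_ext n _ (fun m => (if Nat.eqb m x then laplacian n adj m y else 0)
     - / INR n * laplacian n adj m y)).
  2:{ intros m _. unfold vv. destruct (Nat.eqb m x); ring. }
  rewrite rsum_minus, rsum_scal, rsum_delta, L_colsum by auto.
  rewrite L_row by auto. ring.
Qed.

Lemma row_lemma n adj x t k y : simple_graph adj -> dominating n adj x -> (y < n)%nat ->
  cmatpow n (itL n adj t) k x y =
  cadd (cscale (vv n x y) (cpow (0, t * INR n) k))
       (cscale (if Nat.eqb k 0 then / INR n else 0) Defs.C1).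
Proof.
  intros G D. pose proof D as [Hx Hd].
  assert (INR n <> 0) by (apply not_0_INR; lia).
  revert y. induction k; intros y Hy.
  - simpl. unfold cmatid, vv. destruct (Nat.eqb_spec x y); destruct (Nat.eqb_spec y x);
      try lia; apply C_ext; simpl; field; auto.
  - cbn [cmatpow]. unfold cmatmul.
    rewrite (csum_ext n _ (fun m => cmul (cadd (cscale (vv n x m) (cpow (0, t * INR n) k))
       (cscale (if Nat.eqb k 0 then / INR n else 0) Defs.C1)) (itL n adj t m y))).
    2:{ intros m Hm. rewrite IHk by exact Hm. reflexivity. }
    set (g := if Nat.eqb k 0 then / INR n else 0).
    set (P := cpow (0, t * INR n) k).
    apply C_ext; [rewrite fst_csum | rewrite snd_csum].
    + rewrite (rsum_ext n _ (fun m => (- (snd P * t)) * (vv n x m * laplacian n adj m y))).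
      2:{ intros m _. unfold itL, cmul, cadd, cscale, Defs.C1. simpl. ring. }
      rewrite rsum_scal, L_vsum by auto. cbn [cpow]. simpl. unfold P. ring.
    + rewrite (rsum_ext n _ (fun m => (fst P * t) * (vv n x m * laplacian n adj m y)
          + (g * t) * laplacian n adj m y)).
      2:{ intros m _. unfold itL, cmul, cadd, cscale, Defs.C1. simpl. ring. }
      rewrite rsum_plus, !rsum_scal, L_vsum, L_colsum by auto. cbn [cpow]. simpl. unfold P. ring.
Qed.

Lemma expser_fst n adj x t y N : simple_graph adj -> dominating n adj x -> (y < n)%nat ->
  fst (expser n adj t x y N) = vv n x y * fst (Ecs (t * INR n) N) + / INR n.
Proof.
  intros G D Hy. induction N.
  - unfold expser, Ecs. cbn [csum]. rewrite row_lemma by auto. simpl. field.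
    apply not_0_INR. destruct D; lia.
  - unfold expser in *. rewrite Ecs_S. change (csum (S (S N)) ?f) with (cadd (csum (S N) f) (f (S N))).
    cbn [fst cadd]. rewrite IHN, row_lemma by auto. simpl. ring.
Qed.

Lemma expser_snd n adj x t y N : simple_graph adj -> dominating n adj x -> (y < n)%nat ->
  snd (expser n adj t x y N) = vv n x y * snd (Ecs (t * INR n) N) + 0.
Proof.
  intros G D Hy. induction N.
  - unfold expser, Ecs. cbn [csum]. rewrite row_lemma by auto. simpl. ring.
  - unfold expser in *. rewrite Ecs_S. change (csum (S (S N)) ?f) with (cadd (csum (S N) f) (f (S N))).
    cbn [snd cadd]. rewrite IHN, row_lemma by auto. simpl. ring.
Qed.

Lemma part1 (n : nat) (adj : nat -> nat -> bool) (x : nat) :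
     (1 <= n)%nat -> simple_graph adj -> dominating n adj x ->
     forall (t : R) (y : nat), 0 <= t -> (y < n)%nat ->
       transition_prob n adj t x y
         (if Nat.eqb y x
          then 1 - 2 / INR n * (1 - 1 / INR n) * (1 - cos (INR n * t))
          else 2 / (INR n ^ 2) * (1 - cos (INR n * t))).
Proof.
  intros Hn G D t y _ Hy.
  exists (vv n x y * cos (t * INR n) + / INR n, vv n x y * sin (t * INR n) + 0).
  split.
  - split; simpl.
    + apply cv_affine with (a := fun N => fst (Ecs (t * INR n) N)).
      * intro N. apply expser_fst; auto.
      * apply Ecs_cos.
    + apply cv_affine with (a := fun N => snd (Ecs (t * INR n) N)).
      * intro N. apply expser_snd; auto.
      * apply Ecs_sin.
  - unfold cnorm2. simpl fst; simpl snd.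
    assert (INR n <> 0) by (apply not_0_INR; lia).
    rewrite (Rmult_comm (INR n) t).
    pose proof (sin2_cos2 (t * INR n)) as Hsc. unfold Rsqr in Hsc.
    assert (Hs : sin (t * INR n) ^ 2 = 1 - cos (t * INR n) ^ 2) by (simpl; lra).
    unfold vv. destruct (Nat.eqb_spec y x).
    + replace ((((1 - / INR n) * sin (t * INR n) + 0) ^ 2)) with
        ((1 - / INR n)^2 * sin (t * INR n) ^ 2) by ring.
      rewrite Hs. field. auto.
    + replace ((((0 - / INR n) * sin (t * INR n) + 0) ^ 2)) with
        ((/ INR n)^2 * sin (t * INR n) ^ 2) by ring.
      rewrite Hs. field. auto.
Qed.
Lemma part2 : (forall (adjs : nat -> nat -> nat -> bool) (xs : nat -> nat) (t : R)
          (p : nat -> R),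
     (forall n, (1 <= n)%nat -> simple_graph (adjs n)) ->
     (forall n, (1 <= n)%nat -> dominating n (adjs n) (xs n)) ->
     0 <= t ->
     (forall n, (1 <= n)%nat -> transition_prob n (adjs n) t (xs n) (xs n) (p n)) ->
     Un_cv p 1).
Proof.
  intros adjs xs t p HG HD Ht HP.
  assert (Hp : forall n, (1 <= n)%nat ->
     p n = 1 - 2 / INR n * (1 - 1 / INR n) * (1 - cos (INR n * t))).
  { intros n H. destruct (HP n H) as [u [[H1 H2] Hu]].
    destruct (part1 n (adjs n) (xs n) H (HG n H) (HD n H) t (xs n) Ht (proj1 (HD n H)))
      as [u' [[H1' H2'] Hu']].
    rewrite Nat.eqb_refl in Hu'. rewrite Hu, Hu'. unfold cnorm2.
    rewrite (UL_sequence _ _ _ H1 H1'), (UL_sequence _ _ _ H2 H2'). reflexivity. }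
  intros eps He. destruct (archimed_cor1 (eps/4)) as [N [HN HN0]]; [lra|].
  exists N. intros n Hn. rewrite Hp by lia. unfold R_dist.
  assert (HnN : INR N <= INR n) by (apply le_INR; lia).
  assert (HN1 : 1 <= INR N) by (apply (le_INR 1); lia).
  assert (Hr : / INR n <= / INR N) by (apply Rinv_le_contravar; lra).
  assert (Hr0 : 0 < / INR n) by (apply Rinv_0_lt_compat; lra).
  assert (Hr1 : / INR n <= 1) by (rewrite <- Rinv_1; apply Rinv_le_contravar; lra).
  pose proof (COS_bound (INR n * t)) as [Hc1 Hc2].
  unfold Rdiv. rewrite !Rmult_1_l.
  set (r := / INR n) in *. set (c := cos (INR n * t)) in *.
  replace (1 - 2 * r * (1 - r) * (1 - c) - 1) with (- (2 * r * (1 - r) * (1 - c))) by ring.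
  rewrite Rabs_Ropp. rewrite Rabs_right.
  - assert (H0 : 0 <= r * (1-r)) by nra.
    assert (H1 : r * (1 - r) <= r) by nra.
    assert (r * (1 - r) * (1 - c) <= r * (1 - r) * 2) by (apply Rmult_le_compat_l; lra).
    lra.
  - apply Rle_ge. assert (0 <= r * (1-r)) by nra. nra.
Qed.
Theorem proposition3p1 :
  (forall (n : nat) (adj : nat -> nat -> bool) (x : nat),
     (1 <= n)%nat -> simple_graph adj -> dominating n adj x ->
     forall (t : R) (y : nat), 0 <= t -> (y < n)%nat ->
       transition_prob n adj t x y
         (if Nat.eqb y x
          then 1 - 2 / INR n * (1 - 1 / INR n) * (1 - cos (INR n * t))
          else 2 / (INR n ^ 2) * (1 - cos (INR n * t))))
  /\
  (forall (adjs : nat -> nat -> nat -> bool) (xs : nat -> nat) (t : R)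
          (p : nat -> R),
     (forall n, (1 <= n)%nat -> simple_graph (adjs n)) ->
     (forall n, (1 <= n)%nat -> dominating n (adjs n) (xs n)) ->
     0 <= t ->
     (forall n, (1 <= n)%nat -> transition_prob n (adjs n) t (xs n) (xs n) (p n)) ->
     Un_cv p 1).
Proof. split; [exact part1 | exact part2]. Qed.
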